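(* Let $G$ be a finite $2$-group having a normal subgroup $N$ with $N\cong C_2\times C_2$. Then $G$ is not a $2$-closed group.
   Context: Permutations act on the right. For $X\leq{\rm Sym}(\Omega)$, the $2$-closure of $X$ on $\Omega$ is $X^{(2),\Omega}=\{\theta\in{\rm Sym}(\Omega)\mid \forall \alpha,\beta\in\Omega\ \exists g\in X:\ \alpha^\theta=\alpha^g,\ \beta^\theta=\beta^g\}$. An abstract group $G$ is called a $2$-closed group if $H=H^{(2),\Omega}$ for every set $\Omega$ and every subgroup $H\leq{\rm Sym}(\Omega)$ with $H\cong G$. $C_2$ is the cyclic group of order $2$. *)

(* Defs.v *)
From mathcomp Require Import all_boot all_fingroup all_algebra all_solvable.
Set Implicit Arguments. Unset Strict Implicit. Unset Printing Implicit Defensive.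
Import GroupScope.

Definition C2xC2 := [set: 'Z_2 * 'Z_2]%G.

(* Faithful right actions of G on T correspond exactly to
   subgroups H <= Sym(T) with H isomorphic to G (H = image of the action). *)
Definition faithful_action (gT : finGroupType) (G : {group gT}) (T : Type)
    (act : T -> gT -> T) : Prop :=
  [/\ forall x, act x 1 = x,
      forall x g h, g \in G -> h \in G -> act x (g * h) = act (act x g) h
    & forall g, g \in G -> (forall x, act x g = x) -> g = 1].

(* H = H^(2),Omega where H is the image of the faithful action act:
   every permutation theta of T that agrees on each pair of points with some
   element of H is itself an element of H.  (H <= H^(2) always holds.) *)
Definition two_closed_action (gT : finGroupType) (G : {group gT}) (T : Type)
    (act : T -> gT -> T) : Prop :=
  forall theta : T -> T, bijective theta ->
    (forall a b : T, exists2 g, g \in G & theta a = act a g /\ theta b = act b g) ->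
    exists2 g, g \in G & forall x, theta x = act x g.

(* The abstract group G is 2-closed: for every set Omega and every subgroup
   H <= Sym(Omega) with H isomorphic to G, H = H^(2),Omega. *)
Definition two_closed_group (gT : finGroupType) (G : {group gT}) : Prop :=
  forall (T : Type) (act : T -> gT -> T),
    faithful_action G act -> two_closed_action G act.

(* Main.v *)
Require Import Defs.
From mathcomp Require Import all_boot all_fingroup all_algebra all_solvable.
Import GroupScope.
Set Implicit Arguments. Unset Strict Implicit.

Lemma z2sq (x : 'Z_2) : x * x = 1.
Proof. by apply: val_inj; case: x => [[|[|//]] ?]. Qed.

Lemma sq2 (u : 'Z_2 * 'Z_2) : u ^+ 2 = 1.
Proof. case: u => x y; rewrite expgS expg1.
transitivity (x * x, y * y); first by [].
by rewrite !z2sq.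
Qed.

Lemma isog_facts (gT : finGroupType) (N : {group gT}) :
  N \isog C2xC2 -> #|N| = 4 /\ (forall x, x \in N -> x * x = 1).
Proof.
move=> iso; split.
  by rewrite (card_isog iso) cardsT card_prod card_ord.
case/isogP: iso => f injf fN x xN.
have e: f (x * x) = f 1 by rewrite morph1 morphM // -(expgS _ 1) sq2.
have := injmP injf (x * x) 1; rewrite groupM // group1; move=> h.
by apply: h.
Qed.

Lemma cyc2 (gT : finGroupType) (x : gT) : x * x = 1 -> x != 1 -> <[x]> = [set 1; x].
Proof.
move=> xx x1; apply: cycle2g.
have h2: #[x] %| 2 by rewrite order_dvdn expgS expg1 xx.
have h1: #[x] != 1%N by rewrite order_eq1.
by apply/(prime_nt_dvdP (isT : prime 2) h1).
Qed.

Lemma rc_mulh (gT : finGroupType) (H : {group gT}) h z : h \in H -> H :* (h * z) = H :* z.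
Proof. by move=> hH; rewrite rcosetM rcoset_id. Qed.

Lemma rc_stab (gT : finGroupType) (H : {group gT}) g : H :* g = H -> g \in H.
Proof. by move=> e; rewrite -e rcoset_refl. Qed.

Lemma rc_closed (gT : finGroupType) (G : {group gT}) (H X : {set gT}) g :
  g \in G -> X \in rcosets H G -> X :* g \in rcosets H G.
Proof.
move=> gG /rcosetsP [x xG ->]; apply/rcosetsP; exists (x * g); first exact: groupM.
by rewrite rcosetM.
Qed.

Lemma mixed (gT : finGroupType) (c a h b x y : gT) :
  c * c = 1 -> a * c = c * a -> c * x = x * c -> c * y = y * c ->
  y * a * y^-1 = b -> (b == a) || (b == a * c) -> (h == a) || (h == a * c) ->
  exists2 g, (g == a) || (g == c * a) &
    (<[c]> :* x :* g = <[c]> :* x :* a /\ <[h]> :* y :* g = <[h]> :* y).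
Proof.
move=> cc ac cx cy hb bE hE.
have ya : y * a = b * y by rewrite -hb -!mulgA mulVg mulg1.
have Ea : <[h]> :* y :* a = <[h]> :* (b * y) by rewrite -rcosetM ya.
have Eca : <[h]> :* y :* (c * a) = <[h]> :* ((c * b) * y).
  by rewrite -rcosetM mulgA -cy -mulgA ya mulgA.
have Xca : <[c]> :* x :* (c * a) = <[c]> :* x :* a.
  by rewrite -!rcosetM mulgA -cx -mulgA rc_mulh // cycle_id.
have cac : c * (a * c) = a by rewrite mulgA -ac -mulgA cc mulg1.
case/orP: hE => /eqP hE; case/orP: bE => /eqP bE; subst h; rewrite bE in Ea Eca.
- by exists a; rewrite ?eqxx //; split=> //; rewrite Ea rc_mulh // cycle_id.
- exists (c * a); rewrite ?eqxx ?orbT //; split=> //.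
  by rewrite Eca cac rc_mulh // cycle_id.
- exists (c * a); rewrite ?eqxx ?orbT //; split=> //.
  by rewrite Eca -ac rc_mulh // cycle_id.
- by exists a; rewrite ?eqxx //; split=> //; rewrite Ea rc_mulh // cycle_id.
Qed.

Theorem mainTheorem10 (gT : finGroupType) (G N : {group gT}) :
  2.-group G -> N <| G -> N \isog C2xC2 -> ~ two_closed_group G.
Proof.
move=> pG nsNG iso.
have [cardN sqN] := isog_facts iso.
have sNG := normal_sub nsNG.
have nNG := normal_norm nsNG.
have N1 : N :!=: 1 by rewrite -cardG_gt1 cardN.
have := meet_center_nil (pgroup_nil pG) nsNG N1.
case/trivgPn => c /setIP [cN /centerP [cG cent]] c1.
have : ~~ (N \subset [set 1; c]).
  apply/negP => /subset_leq_card; rewrite cardN cards2; by case: (_ != _).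
case/subsetPn => a aN; rewrite !inE negb_or => /andP [a1 ac'].
have aG := subsetP sNG a aN.
have cc := sqN c cN.
have aa := sqN a aN.
have comm_ac : a * c = c * a by rewrite (cent a aG).
have acN : a * c \in N by rewrite groupM.
have ac1 : a * c != 1.
  apply/eqP => e; move/eqP: ac'; apply; by rewrite -[a]mulg1 -cc mulgA e mul1g.
have acc : a * c != c.
  apply/eqP => e; move/eqP: a1; apply; by rewrite -[a]mulg1 -cc mulgA e cc.
have aca : a * c != a.
  apply/eqP => e; move/eqP: c1; apply; by rewrite -[c]mul1g -aa -mulgA e aa.
have enum b : b \in N -> b != 1 -> b != c -> (b == a) || (b == a * c).
  move=> bN b1 bc; apply/negP => nb.
  have sub : b |: (a * c |: (a |: [set c; 1])) \subset N.
    apply/subsetP => z; rewrite !inE.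
    by move=> /orP[/eqP->|/orP[/eqP->|/orP[/eqP->|/orP[/eqP->|/eqP->]]]] //.
  move: (subset_leq_card sub); rewrite !cardsU1 cards1 cardN !inE.
  move/negP/norP: nb => [nba nbac].
  rewrite (negbTE nba) (negbTE nbac) (negbTE bc) (negbTE b1).
  by rewrite (negbTE aca) (negbTE acc) (negbTE ac1) (negbTE ac') (negbTE a1) c1.
have cycc := cyc2 cc c1.
have cyca := cyc2 aa a1.
have acac : (a * c) * (a * c) = 1 by apply: sqN.
have cycac := cyc2 acac ac1.
have aG' : a * c \in G by rewrite groupM.
pose Rc := rcosets <[c]> G.
pose valid (X : {set gT}) := [|| X \in Rc, X \in rcosets <[a]> G | X \in rcosets <[a * c]> G].
pose act (X : {set gT}) (g : gT) := if valid X then X :* g else X.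
pose theta (X : {set gT}) := if X \in Rc then X :* a else X.
have selfR (H : {group gT}) : (H : {set gT}) \in rcosets H G.
  by apply/rcosetsP; exists 1; rewrite ?group1 ?rcoset1.
have Rc_valid X : X \in Rc -> valid X by rewrite /valid => ->.
have notRc h : h \in N -> h != 1 -> h != c -> (<[h]> : {set gT}) \notin Rc.
  move=> hN h1 hc; apply/negP => /rcosetsP [x xG E].
  have : 1 \in <[c]> :* x by rewrite -E group1.
  move/rcoset_eqP; rewrite rcoset1 -E => E2.
  have : h \in <[c]> by rewrite E2 cycle_id.
  by rewrite cycc !inE (negbTE h1) (negbTE hc).
have vA : valid <[a]> by rewrite /valid selfR orbT.
have vAC : valid <[a * c]> by rewrite /valid selfR !orbT.
have vC : valid <[c]> by rewrite /valid selfR.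
have fa : faithful_action G act.
  split.
  - by move=> X; rewrite /act; case: ifP => // _; exact: rcoset1.
  - move=> X g h gG hG; rewrite /act; case vX: (valid X); last by rewrite vX.
    have -> : valid (X :* g).
      by case/or3P: vX => H; apply/or3P; [apply: Or31|apply: Or32|apply: Or33]; exact: rc_closed.
    by rewrite rcosetM.
  - move=> g gG fx.
    have h1 := fx <[c]>; rewrite /act vC in h1.
    have h2 := fx <[a]>; rewrite /act vA in h2.
    have gc : g \in <[c]> := rc_stab h1.
    have ga : g \in <[a]> := rc_stab h2.
    move: gc ga; rewrite cycc cyca !inE.
    case/orP => /eqP // ->; case/orP => /eqP // e.
    by move/eqP: ac'; rewrite e.
move=> tc.
have thK : cancel theta theta.
  move=> X; rewrite /theta; case hX: (X \in Rc); last by rewrite hX.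
  by rewrite rc_closed // -rcosetM aa rcoset1.
have mix X Y : X \in Rc -> Y \notin Rc ->
    exists2 g, g \in G & theta X = act X g /\ theta Y = act Y g.
  move=> hX hY; case vY: (valid Y); last first.
    by exists a => //; rewrite /theta /act hX (negbTE hY) vY Rc_valid.
  have [h hE hY'] : exists2 h, (h == a) || (h == a * c) & Y \in rcosets <[h]> G.
    move: vY; rewrite /valid (negbTE hY) /= => /orP [] H.
      by exists a; rewrite ?eqxx.
    by exists (a * c); rewrite ?eqxx ?orbT.
  have hX0 := hX.
  case/rcosetsP: hX => x xG EX; case/rcosetsP: hY' => y yG EY.
  have bN : a ^ y^-1 \in N by rewrite memJ_norm // (subsetP nNG) // groupV.
  have bE : (a ^ y^-1 == a) || (a ^ y^-1 == a * c).
    apply: enum => //; first by rewrite conjg_eq1.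
    apply/eqP => e; move/eqP: ac'; apply.
    by rewrite -(conjgKV y a) e conjgE (cent y yG) mulKg.
  have Hb : y * a * y^-1 = a ^ y^-1 by rewrite conjgE invgK mulgA.
  have [g gE [e1 e2]] := mixed cc comm_ac (cent x xG) (cent y yG) Hb bE hE.
  exists g.
    by case/orP: gE => /eqP ->; rewrite ?groupM.
  rewrite /theta /act hX0 (negbTE hY) vY Rc_valid // EX EY e1 e2.
  by split.
have bij : bijective theta by exists theta.
have pairs : forall X Y : {set gT}, exists2 g, g \in G & theta X = act X g /\ theta Y = act Y g.
  move=> X Y.
  case hX: (X \in Rc); case hY: (Y \in Rc).
  + by exists a => //; rewrite /theta /act hX hY !Rc_valid.
  + by apply: mix; rewrite ?hY.
  + have [g gG [e1 e2]] := mix Y X hY (negbT hX).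
    by exists g.
  + exists 1; first exact: group1.
    by rewrite /theta /act hX hY; split; case: ifP; rewrite ?rcoset1.
have := tc _ act fa theta bij pairs.
- case=> g gG all.
  have := all <[a]>; rewrite /theta /act vA (negbTE (notRc a aN a1 ac')).
  move/esym => h1; have ga : g \in <[a]> := rc_stab h1; move: ga; rewrite cyca !inE => ga.
  have := all <[a * c]>; rewrite /theta /act vAC (negbTE (notRc _ acN ac1 acc)).
  move/esym => h2; have gac : g \in <[a * c]> := rc_stab h2; move: gac; rewrite cycac !inE => gac.
  have g1 : g = 1.
    case/orP: ga => /eqP // e; move: gac; rewrite e (negbTE a1) eq_sym (negbTE aca).
    by [].
  have := all <[c]>; rewrite /theta /act vC selfR g1 rcoset1 => h3.
  have : a \in <[c]> := rc_stab h3.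
  by rewrite cycc !inE (negbTE a1) (negbTE ac').
Qed.
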